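(* Let $f:[a,b]\to\mathbb F$ and $h:[a,b]\to\mathbb F$, $h(t)=f(t)\Delta g(t)$. Let \[D_1=\{t\in[a,b]\cap N_g^-: t\in (D_g\cap[a,t))'\},\quad D_2=\{t\in[a,b]\cap N_g^+: t\in (D_g\cap(t,b])'\},\] \[D_3=\{t\in[a,b]\setminus (N_g\cup D_g): t\in (D_g\cap[a,b])'\}.\] For $t\in[a,b]$: 1. If $t^*\in D_1\cup D_2\cup D_3$, then $h$ is $g$-differentiable at $t$ if and only if $\displaystyle\lim_{s\to t^*,\ s\in D_g}\frac{f(s)\Delta g(s)}{g(s)-g(t)}=0$, where the limit is the left-hand one if $t^*\in N_g^-$ and the right-hand one if $t^*\in N_g^+$. 2. If $t^*\in D_g\cap (D_g\cap(t,b])'$, then $h$ is $g$-differentiable at $t$ if and only if $\displaystyle\lim_{s\to t^{*+},\ s\in D_g}f(s)\Delta g(s)=0$. 3. In any other case, $h$ is $g$-differentiable at $t$. Moreover, if $h$ is $g$-differentiable at $t$, then $h'_g(t)=-f(t^* )\chi_{D_g}(t^* )$.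
   Context: Let $g:\mathbb R\to\mathbb R$ be nondecreasing and left-continuous, and $\mathbb F\in\{\mathbb R,\mathbb C\}$. $\Delta g(t)=g(t^+)-g(t)$, $D_g=\{t:\Delta g(t)>0\}$, $C_g=\{t: g\text{ constant on }(t-\varepsilon,t+\varepsilon)\text{ for some }\varepsilon>0\}=\bigcup_{n\in\Lambda}(a_n,b_n)$ (disjoint union of connected components), $N_g^-=\{a_n:n\in\Lambda\}\setminus D_g$, $N_g^+=\{b_n:n\in\Lambda\}\setminus D_g$, $N_g=N_g^-\cup N_g^+$. Fix $a<b$ with $a\notin N_g^-$, $b\notin D_g\cup C_g\cup N_g^+$. For $t\in[a,b]$, $t^*=t$ if $t\notin C_g$ and $t^*=b_n$ if $t\in(a_n,b_n)$. The $g$-derivative of $u:[a,b]\to\mathbb F$ at $t$ is $u'_g(t)=\lim_{s\to t}\frac{u(s)-u(t)}{g(s)-g(t)}$ if $t\notin D_g\cup C_g$ and $u'_g(t)=\lim_{s\to t^{*+}}\frac{u(s)-u(t^* )}{g(s)-g(t^* )}$ if $t\in D_g\cup C_g$, provided the finite limit exists ($u$ is then $g$-differentiable at $t$); limits are over $s\in[a,b]$ with nonzero denominator, and at points of $N_g^+\cup\{a\}$ only the right-hand limit, at points of $N_g^-\cup\{b\}$ only the left-hand limit is taken. $X'$ denotes the set of accumulation points of $X\subset\mathbb R$, and $\chi_{D_g}$ is the indicator function of $D_g$. *)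

(* Defs.v *)
(* R : realType, values in a normed R-module V
   (covers F = R and F = C). *)
From HB Require Import structures.
From mathcomp Require Import all_boot all_order all_algebra.
From mathcomp Require Import all_classical all_reals all_analysis.
Set Implicit Arguments. Unset Strict Implicit. Unset Printing Implicit Defensive.
Import Order.TTheory GRing.Theory Num.Theory.
Import numFieldNormedType.Exports.
Local Open Scope classical_set_scope.
Local Open Scope ring_scope.

Section GDefs.
Context {R : realType}.
Implicit Types (g : R -> R) (t s a b : R).

Definition gplus g t : R := lim (g x @[x --> t^'+]).

Definition Deltag g t : R := gplus g t - g t.

Definition Dg g : set R := [set t | 0 < Deltag g t].

Definition Cg g : set R :=
  [set t | exists2 e : R, 0 < e & forall s, t - e < s < t + e -> g s = g t].

(* left endpoints a_n of the connected components (a_n, b_n) of C_g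
   (finite ones): a ∉ C_g and (a, c) ⊆ C_g for some c > a *)
Definition Cg_left g : set R :=
  [set x | ~ Cg g x /\ exists2 c, x < c & forall s, x < s < c -> Cg g s].

(* right endpoints b_n of the components of C_g *)
Definition Cg_right g : set R :=
  [set x | ~ Cg g x /\ exists2 c, c < x & forall s, c < s < x -> Cg g s].

Definition Ngm g : set R := Cg_left g `\` Dg g.
Definition Ngp g : set R := Cg_right g `\` Dg g.
Definition Ng g : set R := Ngm g `|` Ngp g.

(* t^* : t itself if t ∉ C_g, and the right endpoint b_n of the component
   (a_n, b_n) of C_g containing t otherwise. *)
Definition tstar g t : R :=
  if pselect (Cg g t) then inf [set s | t < s /\ ~ Cg g s] else t.

Definition acc (X : set R) : set R :=
  [set t | forall e : R, 0 < e -> exists s, [/\ s != t, X s & `|s - t| < e]].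

Definition Icc a b : set R := [set s | a <= s <= b].

Section GDeriv.
Context {V : normedModType R}.

Definition gquot g (u : R -> V) t0 s : V := (g s - g t0)^-1 *: (u s - u t0).

Definition gdom g a b t : set R :=
  [set s | [/\ a <= s <= b, s != t, g s != g t,
             (Ngp g t \/ t = a) -> t < s &
             (Ngm g t \/ t = b) -> s < t]].

Definition gderiv_to g a b (u : R -> V) t (l : V) : Prop :=
  ((Dg g t \/ Cg g t) ->
     gquot g u (tstar g t) s @[s --> within
        [set s | [/\ a <= s <= b, tstar g t < s & g s != g (tstar g t)]]
        (nbhs (tstar g t))] --> l) /\
  (~ (Dg g t \/ Cg g t) ->
     gquot g u t s @[s --> within (gdom g a b t) (nbhs t)] --> l).

Definition gdifferentiable g a b (u : R -> V) t : Prop :=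
  exists l, gderiv_to g a b u t l.

End GDeriv.

Definition D1 g a b : set R :=
  [set t | [/\ a <= t <= b, Ngm g t & acc (Dg g `&` [set s | a <= s < t]) t]].
Definition D2 g a b : set R :=
  [set t | [/\ a <= t <= b, Ngp g t & acc (Dg g `&` [set s | t < s <= b]) t]].
Definition D3 g a b : set R :=
  [set t | [/\ a <= t <= b, ~ Ng g t, ~ Dg g t & acc (Dg g `&` Icc a b) t]].

End GDefs.

(* Main.v *)
Require Import Defs.
From HB Require Import structures.
From mathcomp Require Import all_boot all_order all_algebra.
From mathcomp Require Import all_classical all_reals all_analysis.
From mathcomp Require Import ring lra.
Import Order.TTheory GRing.Theory Num.Theory.
Import numFieldNormedType.Exports.
Local Open Scope classical_set_scope.
Local Open Scope ring_scope.
Set Implicit Arguments. Unset Strict Implicit.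

Section S.
Context {R : realType} (g : R -> R) (g_nd : {homo g : x y / x <= y})
  (g_lc : forall t, g x @[x --> t^'-] --> g t).

Let Sr t := g @` [set` `]t, +oo[].

Lemma Sr_lb t : has_lbound (Sr t).
Proof.
exists (g t) => _ [s Hs <-]; move: Hs => /=; rewrite in_itv /= andbT => /ltW.
exact: g_nd.
Qed.

Lemma gplus_cvg_inf t : g x @[x --> t^'+] --> inf (Sr t).
Proof.
have H := @nondecreasing_at_right_cvgr R g t (+oo%O) isT (fun x y _ _ => @g_nd x y) (Sr_lb t).
exact: H.
Qed.

Lemma gplusE t : gplus g t = inf (Sr t).
Proof. by rewrite /gplus; apply: cvg_lim => //; apply: gplus_cvg_inf. Qed.

Lemma gplus_cvg t : g x @[x --> t^'+] --> gplus g t.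
Proof. by rewrite gplusE; apply: gplus_cvg_inf. Qed.

Lemma gplus_ge t : g t <= gplus g t.
Proof.
rewrite gplusE; apply: lb_le_inf.
  by exists (g (t+1)), (t+1) => //=; rewrite in_itv /= andbT ltrDl ltr01.
move=> _ [s Hs <-]; move: Hs => /=; rewrite in_itv /= andbT => /ltW.
exact: g_nd.
Qed.

Lemma gplus_le t s : t < s -> gplus g t <= g s.
Proof.
move=> ts; rewrite gplusE; apply: ge_inf; first exact: Sr_lb.
by exists s => //=; rewrite in_itv /= ts.
Qed.

Lemma Delta_ge0 t : 0 <= Deltag g t.
Proof. by rewrite /Deltag subr_ge0 gplus_ge. Qed.

Lemma nDg_Delta0 t : ~ Dg g t -> Deltag g t = 0.
Proof.
move=> nD; apply/eqP; rewrite eq_le Delta_ge0 andbT leNgt; exact/negP.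
Qed.

Lemma Cg_nDg t : Cg g t -> ~ Dg g t.
Proof.
move=> [e e0 He]; rewrite /Dg /Deltag /= subr_gt0.
have h1 : t < t + e/2 by lra.
have h2 : t - e < t + e/2 < t + e by apply/andP; split; lra.
have := gplus_le h1; rewrite (He _ h2) => H1 H2.
by have := lt_le_trans H2 H1; rewrite ltxx.
Qed.

Lemma Cg_const x y : (forall s, x < s < y -> Cg g s) ->
  forall p q, x < p -> p <= q -> q < y -> g q = g p.
Proof.
move=> HC p q xp pq qy.
apply/eqP; rewrite eq_le (g_nd pq) andbT leNgt; apply/negP => Hlt.
pose E := [set r | p <= r <= q /\ g p < g r].
have E0 : E !=set0 by exists q; rewrite /E /= pq lexx.
have Elb : has_lbound E by exists p => r [/andP[]].
have hinfE : has_inf E by [].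
set u := inf E.
have pu : p <= u by apply: lb_le_inf => // r [/andP[]].
have uq : u <= q by apply: (ge_inf Elb); split => //; apply/andP; split.
have /HC [e e0 He] : x < u < y by apply/andP; split; lra.
have gup : g u = g p.
  case/boolP: (p == u) => [/eqP <- //|pnu].
  have pltu : p < u by rewrite lt_neqAle pnu.
  pose r := Num.max p (u - e/2).
  have pr : p <= r by rewrite /r le_max lexx.
  have ru : r < u by rewrite /r gt_max pltu /=; lra.
  have rE : ~ E r.
    move=> Er; have := ge_inf Elb Er; rewrite -/u => ur; lra.
  have grp : g r = g p.
    apply/eqP; rewrite eq_le (g_nd pr) andbT leNgt; apply/negP => gpr.
    by apply: rE; split => //; apply/andP; split => //; lra.
  rewrite -grp; symmetry; apply: He; apply/andP; split; last lra.
  by rewrite /r lt_max; apply/orP; right; lra.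
have [r Er rlt] := inf_adherent e0 hinfE.
have ur : u <= r by apply: (ge_inf Elb).
have := He r; rewrite gup => H; case: Er => _; rewrite H ?ltxx //.
by apply/andP; split; lra.
Qed.

Lemma Cg_const_right x y : x < y -> (forall s, x < s < y -> Cg g s) ->
  forall p, x < p < y -> g y = g p.
Proof.
move=> xy HC p /andP[xp py].
have H1 : g z @[z --> y^'-] --> g p.
  apply: cvg_near_cst; near=> z.
  apply: (Cg_const HC xp).
  - apply: ltW; near: z; exact: nbhs_left_gt.
  - near: z; exact: nbhs_left_lt.
exact: (cvg_unique (@Rhausdorff R) (@g_lc y) H1).
Unshelve. all: by end_near.
Qed.

Lemma Cg_open t e : 0 < e -> (forall s, t - e < s < t + e -> g s = g t) ->
  forall s, t - e < s < t + e -> Cg g s.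
Proof.
move=> e0 He s /andP[h1 h2].
exists (Num.min (s - (t - e)) (t + e - s)).
  by rewrite lt_min; apply/andP; split; lra.
move=> r /andP[hr1 hr2].
have hm1 : Num.min (s - (t - e)) (t + e - s) <= s - (t - e) by rewrite ge_min lexx.
have hm2 : Num.min (s - (t - e)) (t + e - s) <= t + e - s by rewrite ge_min lexx orbT.
rewrite He; last by apply/andP; split; lra.
by rewrite He //; apply/andP; split; lra.
Qed.

Lemma tstar_Cg t b : Cg g t -> ~ Cg g b -> t <= b ->
  [/\ t < tstar g t, tstar g t <= b, ~ Cg g (tstar g t),
      (forall s, t < s < tstar g t -> Cg g s) & g (tstar g t) = g t].
Proof.
move=> Ct nCb tb.
have tltb : t < b by rewrite lt_neqAle tb andbT; apply/eqP => tb'; apply: nCb; rewrite -tb'.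
pose E := [set s | t < s /\ ~ Cg g s].
have bE : E b by [].
have Elb : has_lbound E by exists t => r [/ltW].
have hinfE : has_inf E by split => //; exists b.
have -> : tstar g t = inf E by rewrite /tstar; case: pselect.
set u := inf E.
have [e e0 He] := Ct.
have tu : t + e <= u.
  apply: lb_le_inf; first by exists b.
  move=> r [tr nCr]; rewrite leNgt; apply/negP => rlt.
  by apply: nCr; apply: (Cg_open e0 He); apply/andP; split; lra.
have ub : u <= b by apply: (ge_inf Elb).
have nCu : ~ Cg g u.
  move=> [e' e0' He'].
  have [r [tr nCr] rlt] := inf_adherent e0' hinfE.
  have ur : u <= r by apply: (ge_inf Elb).
  by apply: nCr; apply: (Cg_open e0' He'); apply/andP; split; lra.
have Cin : forall s, t < s < u -> Cg g s.
  move=> s /andP[ts su]; apply: contrapT => nCs.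
  have := ge_inf Elb (conj ts nCs); rewrite -/u => us; lra.
split => //; first lra.
have xu : t - e < u by lra.
apply: (Cg_const_right xu) ; last by apply/andP; split; lra.
move=> s /andP[s1 s2]; case: (ltP t s) => ts.
  by apply: Cin; apply/andP; split.
by apply: (Cg_open e0 He); apply/andP; split; lra.
Qed.

Lemma noDg x y : x < y -> exists s, x < s < y /\ ~ Dg g s.
Proof.
move=> xy; apply: contrapT => Hn.
have allD : forall s, x < s < y -> Dg g s.
  move=> s hs; apply: contrapT => nD; apply: Hn; exists s; split => //.
have sub : [set` `]x, y[] `<=` [set z | (z \in `]x, y[) /\ discontinuity g z].
  move=> s /= hs; split => //.
  have hs' : x < s < y by move: hs; rewrite in_itv.
  have Ds := allD s hs'.
  split.
  - by apply/cvg_ex; exists (g s); exact: g_lc.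
  - by apply/cvg_ex; exists (gplus g s); exact: (@gplus_cvg s).
  - rewrite (cvg_lim _ (@g_lc s)) // (cvg_lim _ (@gplus_cvg s)) //.
    by apply/eqP => E; move: Ds; rewrite /Dg /Deltag /= -E subrr ltxx.
have ndF : {in `[x, y] &, nondecreasing_fun g} by move=> ? ? _ _; apply: g_nd.
have cD := discontinuity_countable ndF.
have cI : countable [set` `]x, y[] := sub_countable (subset_card_le sub) cD.
have := countable_lebesgue_measure0 cI.
rewrite lebesgue_measure_itv /= lte_fin xy /=.
move=> /eqP; rewrite -EFinD eqe subr_eq0 => /eqP yx.
by move: xy; rewrite yx ltxx.
Qed.

Lemma Cg_const_left x y : x < y -> (forall s, x < s < y -> Cg g s) ->
  forall p, x < p < y -> gplus g x = g p.
Proof.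
move=> xy HC p /andP[xp py].
have H1 : g z @[z --> x^'+] --> g p.
  apply: cvg_near_cst; near=> z; symmetry.
  apply: (Cg_const HC); last exact: py.
  - near: z; exact: nbhs_right_gt.
  - near: z; exact: nbhs_right_le.
exact: (cvg_unique (@Rhausdorff R) (@gplus_cvg x) H1).
Unshelve. all: by end_near.
Qed.

Lemma flat t s : g s = g t -> forall q, t <= q <= s -> g q = g t.
Proof.
move=> gst q /andP[tq qs]; apply/eqP; rewrite eq_le (g_nd tq) andbT -gst.
exact: g_nd.
Qed.

Lemma flat_Cg t s : g s = g t -> forall r, t < r < s -> Cg g r.
Proof.
move=> gst r /andP[tr rs].
exists (Num.min (r - t) (s - r)); first by rewrite lt_min; apply/andP; split; lra.
move=> q /andP[hq1 hq2].
have hm1 : Num.min (r - t) (s - r) <= r - t by rewrite ge_min lexx.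
have hm2 : Num.min (r - t) (s - r) <= s - r by rewrite ge_min lexx orbT.
rewrite (flat gst); last by apply/andP; split; lra.
by rewrite (flat gst) //; apply/andP; split; lra.
Qed.

Lemma right_strict t s : t < s -> g s = g t -> ~ Cg g t -> Cg_left g t.
Proof. by move=> ts gst nC; split => //; exists s => // r hr; apply: (flat_Cg gst). Qed.

Lemma left_strict s t : s < t -> g s = g t -> ~ Cg g t -> Cg_right g t.
Proof.
move=> st gst nC; split => //; exists s => // r hr; apply: (@flat_Cg s t) => //.
Qed.

Lemma Ng_excl t : Ngm g t -> Ngp g t -> False.
Proof.
move=> [[nCt [c tc HC]] nDt] [[_ [c' c't HC']] _].
have H1 : forall q, c' < q < t -> g q = g t.
  by move=> q hq; symmetry; apply: (Cg_const_right c't HC').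
have H2 : forall q, t < q < c -> g q = g t.
  move=> q hq; rewrite -(Cg_const_left tc HC hq).
  by have := nDg_Delta0 nDt; rewrite /Deltag => /eqP; rewrite subr_eq0 => /eqP.
apply: nCt; exists (Num.min (t - c') (c - t)).
  by rewrite lt_min; apply/andP; split; lra.
move=> q /andP[hq1 hq2].
have hm1 : Num.min (t - c') (c - t) <= t - c' by rewrite ge_min lexx.
have hm2 : Num.min (t - c') (c - t) <= c - t by rewrite ge_min lexx orbT.
case: (ltgtP q t) => [qt|tq|->//].
  by apply: H1; apply/andP; split; lra.
by apply: H2; apply/andP; split; lra.
Qed.
End S.

Section F.
Context {R : realType} {V : normedModType R}.

Definition accum (A : set R) (p : R) :=
  forall e : R, 0 < e -> exists s, A s /\ `|s - p| < e.

Lemma within_proper (A : set R) p : accum A p -> ProperFilter (within A (nbhs p)).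
Proof.
move=> acA; apply: within_nbhs_proper.
rewrite /infer => B /nbhs_ballP [e /= e0 Hb].
have [s [As sp]] := acA e e0; exists s; split => //; apply: Hb.
by rewrite -ball_normE /= distrC.
Qed.

Lemma within_trivial (A : set R) (p : R) (f : R -> V) (l : V) :
  (exists2 e : R, 0 < e & forall s, A s -> e <= `|s - p|) ->
  f @ within A (nbhs p) --> l.
Proof.
move=> [e e0 He] U _; apply/nbhs_ballP; exists e => //= x bx Ax.
have := He x Ax; move: bx; rewrite -ball_normE /= distrC => h1 h2.
by have := lt_le_trans h1 h2; rewrite ltxx.
Qed.

Lemma restrict_cvg (A B : set R) (p : R) (Q : R -> V) (l : V) : B `<=` A ->
  Q @ within A (nbhs p) --> l -> Q @ within B (nbhs p) --> l.
Proof.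
move=> BA H; apply: cvg_trans H; apply: cvg_app; exact: within_subset.
Qed.

Lemma cvg_within_uniq (A A' : set R) (p : R) (Q : R -> V) (l m : V) : A' `<=` A -> accum A' p ->
  Q @ within A (nbhs p) --> l -> Q @ within A' (nbhs p) --> m -> l = m.
Proof.
move=> sub acc HA HA'.
have PF := within_proper acc.
have HA2 := restrict_cvg sub HA.
have PF2 := fmap_proper_filter Q PF.
exact: (@cvg_unique _ (@norm_hausdorff _ V) _ PF2 l m HA2 HA').
Qed.

Lemma key_cvg (P : R -> Prop) (A B : set R) (p : R) (Q : R -> V) :
  (forall s, A s -> ~ P s -> Q s = 0) -> (forall s, A s -> P s -> B s) ->
  Q @ within B (nbhs p) --> 0 -> Q @ within A (nbhs p) --> 0.
Proof.
move=> H0 HB H U nU; have HU := H U nU.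
have HU' : nbhs p (fun x => B x -> U (Q x)) := HU.
suff HS : nbhs p (fun x => A x -> U (Q x)) by [].
move: HU'; apply: filterS => x Hx Ax.
case: (pselect (P x)) => Px; first exact: Hx (HB x Ax Px).
by rewrite (H0 x Ax Px); apply: nbhs_singleton.
Qed.

End F.

Section G.
Context {T : topologicalType} {U : topologicalType}.
Lemma restrict_cvgT (A B : set T) (p : T) (Q : T -> U) (l : U) : B `<=` A ->
  Q @ within A (nbhs p) --> l -> Q @ within B (nbhs p) --> l.
Proof.
move=> BA H; apply: cvg_trans H; apply: cvg_app; exact: within_subset.
Qed.

Lemma cvg_within_eq (A : set T) (p : T) (F G : T -> U) (l : U) :
  (forall s, A s -> F s = G s) ->
  G @ within A (nbhs p) --> l -> F @ within A (nbhs p) --> l.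
Proof.
move=> E H W nW; have HW := H W nW.
have HW' : nbhs p (fun x => A x -> W (G x)) := HW.
suff HS : nbhs p (fun x => A x -> W (F x)) by [].
by move: HW'; apply: filterS => x Hx Ax; rewrite E //; apply: Hx.
Qed.
End G.

Lemma nacc {R : realType} (X : set R) p : ~ acc X p ->
  exists2 e : R, 0 < e & forall s, s != p -> X s -> e <= `|s - p|.
Proof.
move=> nA; apply: contrapT => H; apply: nA => e e0.
apply: contrapT => H2; apply: H; exists e => // s sp Xs.
rewrite leNgt; apply/negP => lt; apply: H2; exists s; split => //.
Qed.

Section M.
Context {R : realType} {V : normedModType R} (g : R -> R)
  (g_nd : {homo g : x y / x <= y}) (g_lc : forall t, g x @[x --> t^'-] --> g t)
  (a b : R) (f : R -> V).

Let h := fun s => Deltag g s *: f s.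

Lemma h0 s : ~ Dg g s -> h s = 0.
Proof. by move=> nD; rewrite /h (nDg_Delta0 g_nd nD) scale0r. Qed.

Lemma accR p (P : R -> Prop) : p < b ->
  (forall s, p < s <= b -> ~ Dg g s -> P s) -> accum (P `&` ~` Dg g) p.
Proof.
move=> pb HP e e0.
have lt : p < Num.min b (p + e) by rewrite lt_min pb /=; lra.
have [s [/andP[ps sm] nD]] := noDg g_nd g_lc lt.
have hm1 : Num.min b (p + e) <= b by rewrite ge_min lexx.
have hm2 : Num.min b (p + e) <= p + e by rewrite ge_min lexx orbT.
exists s; split; first split => //.
- by apply: HP => //; apply/andP; split; lra.
- by rewrite ger0_norm; lra.
Qed.

Lemma accL p (P : R -> Prop) : a < p ->
  (forall s, a <= s < p -> ~ Dg g s -> P s) -> accum (P `&` ~` Dg g) p.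
Proof.
move=> ap HP e e0.
have lt : Num.max a (p - e) < p by rewrite gt_max ap /=; lra.
have [s [/andP[ps sm] nD]] := noDg g_nd g_lc lt.
have hm1 : a <= Num.max a (p - e) by rewrite le_max lexx.
have hm2 : p - e <= Num.max a (p - e) by rewrite le_max lexx orbT.
exists s; split; first split => //.
- by apply: HP => //; apply/andP; split; lra.
- by rewrite ltr0_norm; lra.
Qed.


Lemma caseIa p : Dg g p -> a <= p -> p < b ->
  [/\ (forall L : V, gquot g h p @ within [set s | [/\ a <= s <= b, p < s & g s != g p]] (nbhs p) --> L -> L = - f p),
      (forall L : V, gquot g h p @ within [set s | [/\ a <= s <= b, p < s & g s != g p]] (nbhs p) --> L ->
          h @ within [set s | [/\ a <= s <= b, Dg g s & p < s]] (nbhs p) --> 0)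
    & (h @ within [set s | [/\ a <= s <= b, Dg g s & p < s]] (nbhs p) --> 0 ->
       gquot g h p @ within [set s | [/\ a <= s <= b, p < s & g s != g p]] (nbhs p) --> - f p)].
Proof.
move=> Dp ap pb.
set S := [set s | [/\ a <= s <= b, p < s & g s != g p]].
set T := [set s | [/\ a <= s <= b, Dg g s & p < s]].
set D := Deltag g p.
have D0 : D != 0 by rewrite gt_eqF.
have gneq : forall s, p < s -> g s != g p.
  move=> s ps; rewrite gt_eqF //; apply: lt_le_trans (gplus_le g_nd ps).
  by move: Dp; rewrite /Dg /Deltag /= subr_gt0.
have SP : S `<=` [set s | p < s] by move=> s [].
have TS : T `<=` S by move=> s [h1 h2 h3]; split => //; exact: gneq.
have Gc : (fun s => g s - g p) @ within S (nbhs p) --> D.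
  apply: cvgB; last exact: cvg_cst.
  exact: (restrict_cvgT SP (gplus_cvg g_nd (t:=p))).
have Gc' : (fun s => (g s - g p)^-1) @ within S (nbhs p) --> D^-1.
  exact: cvgV.
have hp : h p = D *: f p by [].
have Hnd : gquot g h p @ within (S `&` ~` Dg g) (nbhs p) --> - f p.
  apply: (@cvg_within_eq _ _ _ _ _ (fun s => - ((g s - g p)^-1 *: h p))).
    by move=> s [_ nD]; rewrite /gquot h0 // sub0r scalerN.
  have -> : - f p = - (D^-1 *: h p) by rewrite hp scalerA mulVf // scale1r.
  apply: cvgN; apply: cvgZ; last exact: cvg_cst.
  exact: (restrict_cvgT (@subIsetl _ S (~` Dg g)) Gc').
have accS : accum (S `&` ~` Dg g) p.
  apply: accR => // s /andP[ps sb] _; split => //; last exact: gneq.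
  by apply/andP; split => //; apply: le_trans (ltW ps).
have PartA : forall L, gquot g h p @ within S (nbhs p) --> L -> L = - f p.
  by move=> L HL; apply: (cvg_within_uniq (@subIsetl _ S (~` Dg g)) accS HL Hnd).
split => //.
- move=> L HL; have := PartA L HL => EL; rewrite EL in HL.
  apply: (@cvg_within_eq _ _ _ _ _ (fun s => (g s - g p) *: gquot g h p s + h p)).
    move=> s Ts; rewrite /gquot scalerA mulfV ?scale1r ?subrK //.
    by rewrite subr_eq0; apply: gneq; case: Ts.
  have -> : (0 : V) = D *: (- f p) + h p by rewrite hp scalerN addNr.
  apply: cvgD; last exact: cvg_cst.
  apply: cvgZ.
    exact: (restrict_cvgT TS Gc).
  exact: (restrict_cvgT TS HL).
- move=> HT.
  have HS : h @ within S (nbhs p) --> 0.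
    apply: (key_cvg (P := Dg g)) HT.
      by move=> s _ nD; apply: h0.
    by move=> s [h1 h2 h3] Ds; split.
  have -> : - f p = D^-1 *: (0 - h p) by rewrite sub0r hp scalerN scalerA mulVf // scale1r.
  apply: cvgZ => //; apply: cvgB => //; exact: cvg_cst.
Qed.

Lemma zero_case (S T1 : set R) (p : R) (Q E : R -> V) :
  (forall s, S s -> Q s = E s) -> (forall s, S s -> ~ Dg g s -> E s = 0) ->
  accum (S `&` ~` Dg g) p -> T1 `<=` S -> (forall s, S s -> Dg g s -> T1 s) ->
  [/\ (forall L : V, Q @ within S (nbhs p) --> L -> L = 0),
      (forall L : V, Q @ within S (nbhs p) --> L -> E @ within T1 (nbhs p) --> 0)
    & (E @ within T1 (nbhs p) --> 0 -> Q @ within S (nbhs p) --> 0)].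
Proof.
move=> QE E0 acS TS ST.
have PA : forall L : V, Q @ within S (nbhs p) --> L -> L = 0.
  move=> L HL; apply: (cvg_within_uniq (@subIsetl _ S (~` Dg g)) acS HL).
  apply: (@cvg_within_eq _ _ _ _ _ (fun _ => 0)); last exact: cvg_cst.
  by move=> s [Ss nD]; rewrite QE // E0.
split => //.
- move=> L HL; have EL := PA L HL; rewrite EL in HL.
  apply: (@cvg_within_eq _ _ _ _ _ Q); first by move=> s Ts; rewrite QE //; apply: TS.
  exact: (restrict_cvgT TS HL).
- move=> HE; apply: (key_cvg (P := Dg g) (B := T1)).
  + by move=> s Ss nD; rewrite QE // E0.
  + exact: ST.
  + apply: (@cvg_within_eq _ _ _ _ _ E) => //.
    by move=> s Ts; apply: QE; apply: TS.
Qed.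
End M.


Unset Implicit Arguments.

Theorem proposition3p4 (R : realType) (V : normedModType R)
  (g : R -> R) (a b : R) (f : R -> V)
  (g_nd : {homo g : x y / x <= y})
  (g_lc : forall t, g x @[x --> t^'-] --> g t)
  (ab : a < b)
  (Ha : ~ Ngm g a)
  (Hb : ~ (Dg g b \/ Cg g b \/ Ngp g b))
  (t : R) (Ht : a <= t <= b) :
  let h := fun s => Deltag g s *: f s in
  let ts := tstar g t in
  (* 1 *)
  ((D1 g a b `|` D2 g a b `|` D3 g a b) ts ->
     (gdifferentiable g a b h t <->
       (g s - g t)^-1 *: (Deltag g s *: f s) @[s --> within
          [set s | [/\ a <= s <= b, Dg g s, s != ts, g s != g t &
                     (Ngm g ts -> s < ts) /\ (Ngp g ts -> ts < s)]]
          (nbhs ts)] --> (0 : V))) /\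
  (* 2 *)
  ((Dg g ts /\ acc (Dg g `&` [set s | t < s <= b]) ts) ->
     (gdifferentiable g a b h t <->
       Deltag g s *: f s @[s --> within
          [set s | [/\ a <= s <= b, Dg g s & ts < s]] (nbhs ts)] --> (0 : V))) /\
  (* 3 *)
  (~ (D1 g a b `|` D2 g a b `|` D3 g a b) ts ->
   ~ (Dg g ts /\ acc (Dg g `&` [set s | t < s <= b]) ts) ->
     gdifferentiable g a b h t) /\
  (* moreover *)
  (forall l, gderiv_to g a b h t l -> l = - (\1_(Dg g) ts *: f ts)).
Proof.
move=> h ts.
have nCb : ~ Cg g b by move=> C; apply: Hb; right; left.
have nDb : ~ Dg g b by move=> D; apply: Hb; left.
have nNb : ~ Ngp g b by move=> N; apply: Hb; right; right.
case/andP: (Ht) => a_t tb.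
have DnD : forall x, (D1 g a b `|` D2 g a b `|` D3 g a b) x -> ~ Dg g x.
  by move=> x [[[_ [_ nD] _]|[_ [_ nD] _]]|[_ _ nD _]].
case: (pselect (Dg g t \/ Cg g t)) => HDC.
-
  have [tts tsb] : t <= ts /\ ts <= b.
    case: (pselect (Cg g t)) => Ct.
      by have [? ? _ _ _] := tstar_Cg g_nd g_lc Ct nCb tb; split => //; apply: ltW.
    by rewrite /ts /tstar; case: pselect.
  have ats : a <= ts by apply: le_trans tts.
  case: (pselect (Dg g ts)) => Dts.
  +
    have tsb' : ts < b by rewrite lt_neqAle tsb andbT; apply/eqP => E; apply: nDb; rewrite -E.
    have [PA PB PC] := caseIa g_nd g_lc f Dts ats tsb'.
    have diffC : h @ within [set s | [/\ a <= s <= b, Dg g s & ts < s]] (nbhs ts) --> 0 ->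
        gdifferentiable g a b h t.
      move=> HT; exists (- f ts); split => [_|//]; exact: PC HT.
    split; [|split; [|split]].
    * by move=> /DnD.
    * move=> _; split; last exact: diffC.
      by move=> [l [H1 _]]; exact: PB l (H1 HDC).
    * move=> _ nA; apply: diffC.
      have nA' : ~ acc (Dg g `&` [set s | t < s <= b]) ts by move=> A; apply: nA.
      have [e e0 He] := nacc nA'.
      apply: within_trivial; exists e => // s [/andP[_ sb] Ds tss].
      apply: He; first by rewrite gt_eqF.
      by split => //; apply/andP; split => //; apply: le_lt_trans tss.
    * move=> l [H1 _]; rewrite (PA l (H1 HDC)) indicE mem_set // scale1r //.
  +
    have Ct : Cg g t.
      case: HDC => // Dt; exfalso; apply: Dts.
      have nCt : ~ Cg g t by move=> C; exact: (Cg_nDg g_nd C Dt).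
      by rewrite /ts /tstar; case: pselect.
    have [tlts _ nCts Cin gts] := tstar_Cg g_nd g_lc Ct nCb tb.
    have Npts : Ngp g ts by split => //; split => //; exists t.
    have tsb' : ts < b by rewrite lt_neqAle tsb andbT; apply/eqP => E; apply: nNb; rewrite -E.
    have nNmts : ~ Ngm g ts := fun N => Ng_excl g_nd g_lc N Npts.
    have gneq : forall s, ts < s -> g s != g ts.
      move=> s tss; apply/eqP => E; apply: nNmts; split => //.
      exact: (right_strict g_nd tss E nCts).
    have h0ts : h ts = 0 := h0 g_nd f Dts.
    set S := [set s | [/\ a <= s <= b, ts < s & g s != g ts]].
    set T1 := [set s | [/\ a <= s <= b, Dg g s, s != ts, g s != g t &
                     (Ngm g ts -> s < ts) /\ (Ngp g ts -> ts < s)]].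
    have QE : forall s, S s -> gquot g h ts s = (g s - g t)^-1 *: (Deltag g s *: f s).
      by move=> s _; rewrite /gquot h0ts subr0 gts.
    have E0 : forall s, S s -> ~ Dg g s -> (g s - g t)^-1 *: (Deltag g s *: f s) = 0.
      move=> s _ nD; have H : Deltag g s *: f s = 0 := h0 g_nd f nD.
      by rewrite H scaler0.
    have acS : accum (S `&` ~` Dg g) ts.
      apply: (accR g_nd g_lc tsb') => s /andP[tss sb] _; split => //; last exact: gneq.
      by apply/andP; split => //; apply: le_trans (ltW tss).
    have TS : T1 `<=` S.
      move=> s [sab Ds sts gst [_ H2]]; split => //; [exact: H2 Npts | by rewrite gts].
    have ST : forall s, S s -> Dg g s -> T1 s.
      move=> s [sab tss gss] Ds.
      split; [done|done|by rewrite gt_eqF|by rewrite -gts|].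
      by split => // N; exfalso; exact: nNmts N.
    have [ZA ZB ZC] := zero_case QE E0 acS TS ST.
    split; [|split; [|split]].
    * move=> _; split.
        by move=> [l [H1 _]]; exact: ZB l (H1 HDC).
      by move=> HE; exists 0; split => [_|//]; exact: ZC HE.
    * by move=> [D _].
    * move=> nD _; exists 0; split => [_|//]; apply: ZC; apply: within_trivial.
      have nA : ~ acc (Dg g `&` [set s | ts < s <= b]) ts.
        by move=> A; apply: nD; left; right; split => //; apply/andP; split.
      have [e e0 He] := nacc nA.
      exists e => // s [/andP[s1 s2] Ds sts gst [_ H2]].
      by apply: He => //; split => //; apply/andP; split => //; exact: H2 Npts.
    * move=> l [H1 _]; rewrite (ZA l (H1 HDC)) indicE memNset // scale0r oppr0 //.
-
  have nDt : ~ Dg g t by move=> D; apply: HDC; left.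
  have nCt : ~ Cg g t by move=> C; apply: HDC; right.
  have tsE : ts = t by rewrite /ts /tstar; case: pselect.
  rewrite tsE.
  have h0t : h t = 0 := h0 g_nd f nDt.
  set S := gdom g a b t.
  set T1 := [set s | [/\ a <= s <= b, Dg g s, s != t, g s != g t &
                     (Ngm g t -> s < t) /\ (Ngp g t -> t < s)]].
  have QE : forall s, S s -> gquot g h t s = (g s - g t)^-1 *: (Deltag g s *: f s).
    by move=> s _; rewrite /gquot h0t subr0.
  have E0 : forall s, S s -> ~ Dg g s -> (g s - g t)^-1 *: (Deltag g s *: f s) = 0.
    move=> s _ nD; have H : Deltag g s *: f s = 0 := h0 g_nd f nD.
    by rewrite H scaler0.
  have TS : T1 `<=` S.
    move=> s [sab Ds st gst [H1 H2]]; split => //.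
    + case => [N|ta]; first exact: H2 N.
      by rewrite lt_neqAle eq_sym st /= ta; case/andP: sab.
    + case => [N|tb']; first exact: H1 N.
      by rewrite lt_neqAle st /= tb'; case/andP: sab.
  have ST : forall s, S s -> Dg g s -> T1 s.
    move=> s [sab st gst H1 H2] Ds; split => //; split => N.
    + by apply: H2; left.
    + by apply: H1; left.
  have acS : accum (S `&` ~` Dg g) t.
    case: (pselect (Ngm g t)) => Nm.
      have alt : a < t.
        by rewrite lt_neqAle a_t andbT; apply/eqP => E; apply: Ha; rewrite E.
      have nNp : ~ Ngp g t := fun N => Ng_excl g_nd g_lc Nm N.
      apply: (accL g_nd g_lc alt) => s /andP[a_s st] _; split.
      + by apply/andP; split => //; apply: le_trans tb; apply: ltW.
      + by rewrite lt_eqF.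
      + apply/eqP => E; apply: nNp; split => //; exact: (left_strict g_nd st E nCt).
      + by case => [N|ta]; [exfalso; exact: nNp N | move: alt; rewrite ta ltxx].
      + by move=> _.
    case: (pselect (Ngp g t)) => Np.
      have tlb : t < b by rewrite lt_neqAle tb andbT; apply/eqP => E; apply: nNb; rewrite -E.
      apply: (accR g_nd g_lc tlb) => s /andP[ts' sb] _; split.
      + by apply/andP; split => //; apply: le_trans a_t (ltW ts').
      + by rewrite gt_eqF.
      + apply/eqP => E; apply: Nm; split => //; exact: (right_strict g_nd ts' E nCt).
      + by move=> _.
      + by case => [N|tb']; [exfalso; exact: Nm N | move: tlb; rewrite tb' ltxx].
    case: (ltP t b) => tb'.
      apply: (accR g_nd g_lc tb') => s /andP[ts' sb] _; split.
      + by apply/andP; split => //; apply: le_trans a_t (ltW ts').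
      + by rewrite gt_eqF.
      + apply/eqP => E; apply: Nm; split => //; exact: (right_strict g_nd ts' E nCt).
      + by move=> _.
      + by case => [N|tb'']; [exfalso; exact: Nm N | move: tb'; rewrite tb'' ltxx].
    have tEb : t = b by apply/eqP; rewrite eq_le tb tb'.
    have alt : a < t by rewrite tEb.
    apply: (accL g_nd g_lc alt) => s /andP[a_s st] _; split.
    + by apply/andP; split => //; apply: le_trans tb; apply: ltW.
    + by rewrite lt_eqF.
    + apply/eqP => E; apply: Np; split => //; exact: (left_strict g_nd st E nCt).
    + by case => [N|ta]; [exfalso; exact: Np N | move: alt; rewrite ta ltxx].
    + by move=> _.
  have [ZA ZB ZC] := zero_case QE E0 acS TS ST.
  split; [|split; [|split]].
  + move=> _; split.
      by move=> [l [_ H2]]; exact: ZB l (H2 HDC).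
    by move=> HE; exists 0; split => [C|_]; [exfalso; exact: HDC C | exact: ZC HE].
  + by move=> [D _]; exfalso; apply: HDC; left.
  + move=> nD _; exists 0; split => [C|_]; first by exfalso; exact: HDC C.
    apply: ZC; apply: within_trivial.
    case: (pselect (Ngm g t)) => Nm.
      have nA : ~ acc (Dg g `&` [set s | a <= s < t]) t.
        by move=> A; apply: nD; left; left; split.
      have [e e0 He] := nacc nA.
      exists e => // s [/andP[s1 s2] Ds st gst [H1 _]].
      by apply: He => //; split => //; apply/andP; split => //; exact: H1 Nm.
    case: (pselect (Ngp g t)) => Np.
      have nA : ~ acc (Dg g `&` [set s | t < s <= b]) t.
        by move=> A; apply: nD; left; right; split.
      have [e e0 He] := nacc nA.
      exists e => // s [/andP[s1 s2] Ds st gst [_ H2]].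
      by apply: He => //; split => //; apply/andP; split => //; exact: H2 Np.
    have nA : ~ acc (Dg g `&` Icc a b) t.
      by move=> A; apply: nD; right; split => // -[N|N]; [exact: Nm N | exact: Np N].
    have [e e0 He] := nacc nA.
    exists e => // s [sab Ds st gst _].
    by apply: He.
  + move=> l [_ H2]; rewrite (ZA l (H2 HDC)) indicE memNset // scale0r oppr0 //.
Qed.
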